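(* Let $a>0$, let $q\in C^{1}[-a,a]$ be complex-valued, and let $f\in C^{2}[-a,a]$ be a solution of $f''-qf=0$ with $f(x)\neq0$ for all $x\in[-a,a]$ and $f(0)=1$; put $h:=f'(0)$. Let $K(x,t)$ be the solution of the Goursat problem $\big(\partial_x^{2}-q(x)\big)K=\partial_t^{2}K$, $K(x,x)=\frac12\int_0^x q(s)\,ds$, $K(x,-x)=0$, let $$\mathbf{K}(x,t;h)=\frac{h}{2}+K(x,t)+\frac{h}{2}\int_{t}^{x}\big(K(x,s)-K(x,-s)\big)\,ds,$$ and $\mathbf{T}u(x)=u(x)+\int_{-x}^{x}\mathbf{K}(x,t;h)u(t)\,dt$. Let $\{\varphi_k\}$ be the functions built from $f$ with base point $x_0=0$ (see context). Then $\mathbf{T}[x^k]=\varphi_k$ for every $k\in\mathbb{N}_0$, and $$\Big(-\frac{d^{2}}{dx^{2}}+q(x)\Big)\mathbf{T}[u]=\mathbf{T}\Big[-\frac{d^{2}u}{dx^{2}}\Big]\qquad\text{for every }u\in C^{2}[-a,a].$$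
   Context: Given a nonvanishing $f\in C^2$ on an interval containing $x_0$, define $\widetilde{X}^{(0)}\equiv X^{(0)}\equiv1$ and for $n\ge1$: $\widetilde{X}^{(n)}(x)=n\int_{x_0}^{x}\widetilde{X}^{(n-1)}(s)(f^{2}(s))^{(-1)^{n-1}}ds$, $X^{(n)}(x)=n\int_{x_0}^{x}X^{(n-1)}(s)(f^{2}(s))^{(-1)^{n}}ds$; set $\varphi_k=fX^{(k)}$ for odd $k$ and $\varphi_k=f\widetilde{X}^{(k)}$ for even $k$. *)

(* Defs.v *)
From Stdlib Require Import Reals.
From Coquelicot Require Import Coquelicot.

Open Scope C_scope.

Definition CDeriv (f : R -> C) (x : R) (l : C) : Prop :=
  @is_derive R_AbsRing C_R_NormedModule f x l.

Definition CInt (f : R -> C) (a b : R) : C :=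
  @RInt C_R_CompleteNormedModule f a b.

Definition Ccont (f : R -> C) (x : R) : Prop :=
  @continuous R_UniformSpace C_R_NormedModule f x.

Definition Ccont2 (K : R -> R -> C) (x t : R) : Prop :=
  @continuous (prod_UniformSpace R_UniformSpace R_UniformSpace) C_R_NormedModule
    (fun p : R * R => K (fst p) (snd p)) (x, t).

Definition cfun_C1 (f f1 : R -> C) : Prop :=
  (forall x, CDeriv f x (f1 x)) /\ (forall x, Ccont f1 x).

Definition cfun_C2 (f f1 f2 : R -> C) : Prop :=
  (forall x, CDeriv f x (f1 x)) /\ (forall x, CDeriv f1 x (f2 x)) /\
  (forall x, Ccont f2 x).

Definition cfun2_C2 (K Kxx Ktt : R -> R -> C) : Prop :=
  exists Kx Kt Kxt Ktx : R -> R -> C,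
    (forall x t, CDeriv (fun y => K y t) x (Kx x t)) /\
    (forall x t, CDeriv (fun s => K x s) t (Kt x t)) /\
    (forall x t, CDeriv (fun y => Kx y t) x (Kxx x t)) /\
    (forall x t, CDeriv (fun s => Kx x s) t (Kxt x t)) /\
    (forall x t, CDeriv (fun y => Kt y t) x (Ktx x t)) /\
    (forall x t, CDeriv (fun s => Kt x s) t (Ktt x t)) /\
    (forall x t, Ccont2 K x t /\ Ccont2 Kx x t /\ Ccont2 Kt x t /\
       Ccont2 Kxx x t /\ Ccont2 Kxt x t /\ Ccont2 Ktx x t /\ Ccont2 Ktt x t).

Fixpoint Xtil (f : R -> C) (x0 : R) (n : nat) : R -> C :=
  match n with
  | O => fun _ => 1
  | S m => fun x => RtoC (INR (S m)) *
      CInt (fun s => Xtil f x0 m s *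
              (if Nat.even m then f s * f s else / (f s * f s))) x0 x
  end.
(* exponent (-1)^(n-1) with n = m+1 is (-1)^m: f^2 if m even, f^-2 if m odd *)

Fixpoint Xn (f : R -> C) (x0 : R) (n : nat) : R -> C :=
  match n with
  | O => fun _ => 1
  | S m => fun x => RtoC (INR (S m)) *
      CInt (fun s => Xn f x0 m s *
              (if Nat.even m then / (f s * f s) else f s * f s)) x0 x
  end.
(* exponent (-1)^n with n = m+1 is (-1)^(m+1): f^-2 if m even, f^2 if m odd *)

Definition phik (f : R -> C) (x0 : R) (k : nat) : R -> C :=
  fun x => if Nat.odd k then f x * Xn f x0 k x else f x * Xtil f x0 k x.

Definition boldK (K : R -> R -> C) (h : C) (x t : R) : C :=
  h / 2 + K x t + h / 2 * CInt (fun s => K x s - K x (- s)%R) t x.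

Definition Top (K : R -> R -> C) (h : C) (u : R -> C) (x : R) : C :=
  u x + CInt (fun t => boldK K h x t * u t) (- x) x.

(* Main.v *)
Require Import Defs.
From Stdlib Require Import Reals Lra Lia.
From Coquelicot Require Import Coquelicot.
Open Scope C_scope.

Lemma CDeriv_split (f : R -> C) x l :
  CDeriv f x l <-> is_derive (fun y => fst (f y)) x (fst l) /\ is_derive (fun y => snd (f y)) x (snd l).
Proof.
  unfold CDeriv, is_derive; split.
  - intro H; split.
    + eapply filterdiff_ext_lin.
      apply (filterdiff_comp' f (fun z : C_R_NormedModule => fst z)); [exact H|].
      apply filterdiff_linear. apply (@is_linear_fst R_AbsRing R_NormedModule R_NormedModule).
      intro y; reflexivity.
    + eapply filterdiff_ext_lin.
      apply (filterdiff_comp' f (fun z : C_R_NormedModule => snd z)); [exact H|].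
      apply filterdiff_linear. apply (@is_linear_snd R_AbsRing R_NormedModule R_NormedModule).
      intro y; reflexivity.
  - intros [H1 H2].
    apply (filterdiff_ext (fun y => (fst (f y), snd (f y)) : C_R_NormedModule)).
    { intro y; simpl; destruct (f y); reflexivity. }
    eapply filterdiff_ext_lin.
    refine (@filterdiff_comp_2 R_AbsRing R_NormedModule R_NormedModule R_NormedModule C_R_NormedModule (locally x) _
       (fun y => fst (f y)) (fun y => snd (f y)) (fun a b => (a,b) : C) (fun y => scal y (fst l)) (fun y => scal y (snd l)) (fun a b => (a,b) : C) H1 H2 _).
    apply filterdiff_linear.
    apply (is_linear_ext (fun t => t)). intro t; destruct t; reflexivity.
    apply is_linear_id.
    intro y; destruct l; reflexivity.
Qed.
Lemma scal_C (r : R) (z : C) : @scal R_AbsRing C_R_NormedModule r z = RtoC r * z.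
Proof. destruct z as [u v]; unfold RtoC, Cmult; simpl; unfold scal; simpl; unfold prod_scal, scal, mult; simpl; unfold mult; simpl; f_equal; ring. Qed.
Lemma plus_C (a b : C) : @plus C_R_NormedModule a b = a + b.
Proof. reflexivity. Qed.
Lemma opp_C (a : C) : @opp C_R_NormedModule a = - a.
Proof. reflexivity. Qed.
Lemma minus_C (a b : C) : @minus C_R_NormedModule a b = a - b.
Proof. reflexivity. Qed.
Lemma zero_C : @zero C_R_NormedModule = RtoC 0.
Proof. reflexivity. Qed.

Lemma CDeriv_ext (f g : R -> C) x l : (forall y, f y = g y) -> CDeriv f x l -> CDeriv g x l.
Proof. intros H D. unfold CDeriv in *. eapply is_derive_ext; eauto. Qed.

Lemma CDeriv_ext_loc (f g : R -> C) x l : locally x (fun y => f y = g y) -> CDeriv f x l -> CDeriv g x l.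
Proof. intros H D. unfold CDeriv in *. eapply is_derive_ext_loc; eauto. Qed.

Lemma CDeriv_unique (f : R -> C) x l1 l2 : CDeriv f x l1 -> CDeriv f x l2 -> l1 = l2.
Proof.
  intros H1 H2; apply CDeriv_split in H1; apply CDeriv_split in H2.
  destruct H1 as [A1 B1]; destruct H2 as [A2 B2].
  apply is_derive_unique in A1; apply is_derive_unique in A2.
  apply is_derive_unique in B1; apply is_derive_unique in B2.
  destruct l1, l2; simpl in *; f_equal; congruence.
Qed.

Lemma CDeriv_const (c : C) x : CDeriv (fun _ => c) x (RtoC 0).
Proof. unfold CDeriv. apply (@is_derive_const R_AbsRing C_R_NormedModule c x). Qed.

Lemma CDeriv_RtoC (g : R -> R) x dg : is_derive g x dg -> CDeriv (fun y => RtoC (g y)) x (RtoC dg).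
Proof. intro H. apply CDeriv_split; simpl; split; auto. apply (@is_derive_const R_AbsRing R_NormedModule 0%R x). Qed.

Lemma CDeriv_plus (f g : R -> C) x df dg : CDeriv f x df -> CDeriv g x dg ->
  CDeriv (fun y => f y + g y) x (df + dg).
Proof. intros H1 H2. unfold CDeriv in *. apply (is_derive_plus f g x df dg H1 H2). Qed.

Lemma CDeriv_opp (f : R -> C) x df : CDeriv f x df -> CDeriv (fun y => - f y) x (- df).
Proof. intros H1. unfold CDeriv in *. apply (is_derive_opp f x df H1). Qed.

Lemma CDeriv_minus (f g : R -> C) x df dg : CDeriv f x df -> CDeriv g x dg ->
  CDeriv (fun y => f y - g y) x (df - dg).
Proof. intros H1 H2. unfold CDeriv in *. apply (is_derive_minus f g x df dg H1 H2). Qed.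

Lemma CDeriv_mult (f g : R -> C) x df dg : CDeriv f x df -> CDeriv g x dg ->
  CDeriv (fun y => f y * g y) x (df * g x + f x * dg).
Proof.
  intros H1 H2; apply CDeriv_split in H1; apply CDeriv_split in H2.
  destruct H1 as [A1 B1]; destruct H2 as [A2 B2].
  apply CDeriv_split; simpl; split.
  - eapply is_derive_ext. intro y. reflexivity.
    evar (l : R).
    replace (fst df * fst (g x) - snd df * snd (g x) + (fst (f x) * fst dg - snd (f x) * snd dg))%R with l.
    apply (is_derive_minus (fun y => fst (f y) * fst (g y))%R (fun y => snd (f y) * snd (g y))%R).
    apply (is_derive_mult (fun y => fst (f y)) (fun y => fst (g y)) x _ _ A1 A2). intros; apply Rmult_comm.
    apply (is_derive_mult (fun y => snd (f y)) (fun y => snd (g y)) x _ _ B1 B2). intros; apply Rmult_comm.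
    unfold l, minus, plus, opp, mult; simpl. ring.
  - evar (l : R).
    replace (fst df * snd (g x) + snd df * fst (g x) + (fst (f x) * snd dg + snd (f x) * fst dg))%R with l.
    apply (is_derive_plus (fun y => fst (f y) * snd (g y))%R (fun y => snd (f y) * fst (g y))%R).
    apply (is_derive_mult (fun y => fst (f y)) (fun y => snd (g y)) x _ _ A1 B2). intros; apply Rmult_comm.
    apply (is_derive_mult (fun y => snd (f y)) (fun y => fst (g y)) x _ _ B1 A2). intros; apply Rmult_comm.
    unfold l, minus, plus, opp, mult; simpl. ring.
Qed.

Lemma CDeriv_comp (f : R -> C) (g : R -> R) x df dg :
  CDeriv f (g x) df -> is_derive g x dg -> CDeriv (fun y => f (g y)) x (RtoC dg * df).
Proof.
  intros H1 H2. unfold CDeriv in *. rewrite <- scal_C.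
  apply (is_derive_comp f g x df dg H1 H2).
Qed.

Lemma CDeriv_cont (f : R -> C) x l : CDeriv f x l -> Ccont f x.
Proof. intro H. unfold Ccont. apply ex_derive_continuous. exists l. exact H. Qed.

Lemma C_neq0_n (z : C) : z <> RtoC 0 -> (fst z ^ 2 + snd z ^ 2 <> 0)%R.
Proof.
  intros H E. apply H. destruct z as [u v]; simpl in *.
  assert (u = 0%R) by nra. assert (v = 0%R) by nra. subst. reflexivity.
Qed.

Lemma CDeriv_inv (g : R -> C) x dg : CDeriv g x dg -> g x <> RtoC 0 ->
  CDeriv (fun y => / g y) x (- dg / (g x * g x)).
Proof.
  intros H Hn. pose proof (C_neq0_n _ Hn) as Hn'.
  apply CDeriv_split in H. destruct H as [A B].
  set (a := fun y => fst (g y)) in *. set (b := fun y => snd (g y)) in *.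
  assert (N : is_derive (fun y => (a y ^ 2 + b y ^ 2)%R) x (2 * a x * fst dg + 2 * b x * snd dg)%R).
  { eapply is_derive_ext. intro; reflexivity.
    evar (l:R). replace (2 * a x * fst dg + 2 * b x * snd dg)%R with l.
    apply (is_derive_plus (fun y => a y ^ 2)%R (fun y => b y ^2)%R).
    apply (is_derive_pow a 2 x _ A). apply (is_derive_pow b 2 x _ B).
    unfold l, plus; simpl; ring. }
  pose proof (is_derive_inv _ x _ N Hn') as I.
  apply CDeriv_split; split.
  - eapply (is_derive_ext (fun y => a y * / (a y^2 + b y^2))%R). intro t; reflexivity.
    pose proof (is_derive_mult a _ x _ _ A I Rmult_comm) as D.
    match type of D with is_derive _ _ ?V => replace (fst (- dg / (g x * g x))) with V; [exact D|] end.
    unfold a, b in *. destruct (g x) as [u v]; destruct dg as [p r]; simpl in *.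
    unfold mult, plus, opp; simpl. field; repeat split; intro E; apply Hn'; nra.
  - eapply (is_derive_ext (fun y => - b y * / (a y^2 + b y^2))%R). intro t; reflexivity.
    pose proof (is_derive_mult (fun y => - b y)%R _ x _ _ (is_derive_opp b x _ B) I Rmult_comm) as D.
    match type of D with is_derive _ _ ?V => replace (snd (- dg / (g x * g x))) with V; [exact D|] end.
    unfold a, b in *. destruct (g x) as [u v]; destruct dg as [p r]; simpl in *.
    unfold mult, plus, opp; simpl. field; repeat split; intro E; apply Hn'; nra.
Qed.

Lemma is_CInt_split (f : R -> C) a b (I : C) :
  @is_RInt C_R_NormedModule f a b I <->
  is_RInt (fun t => fst (f t)) a b (fst I) /\ is_RInt (fun t => snd (f t)) a b (snd I).
Proof.
  split.
  - intro H; split.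
    + apply (@is_RInt_fct_extend_fst R_NormedModule R_NormedModule f a b I H).
    + apply (@is_RInt_fct_extend_snd R_NormedModule R_NormedModule f a b I H).
  - intros [H1 H2].
    destruct I as [u v].
    apply (@is_RInt_ext C_R_NormedModule (fun t => (fst (f t), snd (f t)))).
    { intros; destruct (f x); reflexivity. }
    apply (@is_RInt_fct_extend_pair R_NormedModule R_NormedModule (fun t => (fst (f t), snd (f t))) a b u v H1 H2).
Qed.

Lemma CInt_correct (f : R -> C) a b : ex_RInt (V:=C_R_CompleteNormedModule) f a b ->
  @is_RInt C_R_NormedModule f a b (CInt f a b).
Proof. intro H. unfold CInt. apply (@RInt_correct C_R_CompleteNormedModule). exact H. Qed.

Lemma CInt_unique (f : R -> C) a b I : @is_RInt C_R_NormedModule f a b I -> CInt f a b = I.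
Proof. intro H. unfold CInt. apply (@is_RInt_unique C_R_CompleteNormedModule). exact H. Qed.

Lemma Ccont_split (f : R -> C) x : Ccont f x <->
  continuous (fun t => fst (f t)) x /\ continuous (fun t => snd (f t)) x.
Proof.
  unfold Ccont; split.
  - intro H; split.
    + apply (continuous_comp f (fun z : C => fst z)); auto.
      destruct (f x); apply (@continuous_fst R_UniformSpace R_UniformSpace).
    + apply (continuous_comp f (fun z : C => snd z)); auto.
      destruct (f x); apply (@continuous_snd R_UniformSpace R_UniformSpace).
  - intros [H1 H2].
    apply (continuous_ext (fun t => (fst (f t), snd (f t)) : C)).
    { intros; destruct (f x0); reflexivity. }
    apply (@continuous_comp_2 R_UniformSpace R_UniformSpace R_UniformSpace C_R_NormedModule
      (fun t => fst (f t)) (fun t => snd (f t)) (fun a b => (a,b))); auto.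
    apply (continuous_ext (fun x => x)). { intros [u v]; reflexivity. }
    apply continuous_id.
Qed.

Lemma Cex_int (f : R -> C) a b : (forall z, Rmin a b <= z <= Rmax a b -> Ccont f z) ->
  ex_RInt (V:=C_R_CompleteNormedModule) f a b.
Proof. intro H. apply (@ex_RInt_continuous C_R_CompleteNormedModule). exact H. Qed.

Lemma CInt_FTC (F f : R -> C) a b :
  (forall x, Rmin a b <= x <= Rmax a b -> CDeriv F x (f x)) ->
  (forall x, Rmin a b <= x <= Rmax a b -> Ccont f x) ->
  CInt f a b = F b - F a.
Proof.
  intros H1 H2. unfold CInt. apply (@is_RInt_unique C_R_CompleteNormedModule).
  apply (@is_RInt_derive C_R_CompleteNormedModule F f a b H1 H2).
Qed.

Lemma is_CInt_scalC (f : R -> C) a b I c : @is_RInt C_R_NormedModule f a b I ->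
  @is_RInt C_R_NormedModule (fun t => c * f t) a b (c * I).
Proof.
  intro H. apply is_CInt_split in H. destruct H as [H1 H2].
  apply is_CInt_split; simpl; split.
  - apply (is_RInt_minus (fun t => fst c * fst (f t))%R (fun t => snd c * snd (f t))%R).
    apply (is_RInt_scal (fun t => fst (f t)) a b (fst c) _ H1).
    apply (is_RInt_scal (fun t => snd (f t)) a b (snd c) _ H2).
  - apply (is_RInt_plus (fun t => fst c * snd (f t))%R (fun t => snd c * fst (f t))%R).
    apply (is_RInt_scal (fun t => snd (f t)) a b (fst c) _ H2).
    apply (is_RInt_scal (fun t => fst (f t)) a b (snd c) _ H1).
Qed.

Lemma CInt_scalC (f : R -> C) a b c : ex_RInt (V:=C_R_CompleteNormedModule) f a b ->
  CInt (fun t => c * f t) a b = c * CInt f a b.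
Proof. intro H. apply CInt_unique. apply is_CInt_scalC. apply CInt_correct; auto. Qed.

Lemma CInt_plus (f g : R -> C) a b : ex_RInt (V:=C_R_CompleteNormedModule) f a b ->
  ex_RInt (V:=C_R_CompleteNormedModule) g a b ->
  CInt (fun t => f t + g t) a b = CInt f a b + CInt g a b.
Proof. intros H1 H2. unfold CInt. apply (@RInt_plus C_R_CompleteNormedModule); auto. Qed.

Lemma CInt_minus (f g : R -> C) a b : ex_RInt (V:=C_R_CompleteNormedModule) f a b ->
  ex_RInt (V:=C_R_CompleteNormedModule) g a b ->
  CInt (fun t => f t - g t) a b = CInt f a b - CInt g a b.
Proof. intros H1 H2. unfold CInt. apply (@RInt_minus C_R_CompleteNormedModule); auto. Qed.

Lemma CInt_opp (f : R -> C) a b : ex_RInt (V:=C_R_CompleteNormedModule) f a b ->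
  CInt (fun t => - f t) a b = - CInt f a b.
Proof. intro H. unfold CInt. apply (@RInt_opp C_R_CompleteNormedModule); auto. Qed.

Lemma CInt_ext (f g : R -> C) a b : (forall x, Rmin a b < x < Rmax a b -> f x = g x) ->
  CInt f a b = CInt g a b.
Proof. intro H. unfold CInt. apply (@RInt_ext C_R_CompleteNormedModule); auto. Qed.

Lemma CInt_point (f : R -> C) a : CInt f a a = RtoC 0.
Proof. unfold CInt. apply (@RInt_point C_R_CompleteNormedModule). Qed.

Lemma CInt_Chasles (f : R -> C) a b c : ex_RInt (V:=C_R_CompleteNormedModule) f a b ->
  ex_RInt (V:=C_R_CompleteNormedModule) f b c -> CInt f a b + CInt f b c = CInt f a c.
Proof. intros H1 H2. unfold CInt. apply (@RInt_Chasles C_R_CompleteNormedModule); auto. Qed.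

Lemma CInt_comp_opp (f : R -> C) a b : ex_RInt (V:=C_R_CompleteNormedModule) f (- a) (- b) ->
  CInt (fun y => f (- y)%R) a b = - CInt f (- a) (- b).
Proof.
  intro H. apply CInt_unique.
  apply (@is_RInt_ext C_R_NormedModule (fun y => opp (opp (f (- y)%R)))).
  { intros; apply (@opp_opp C_R_NormedModule). }
  apply (@is_RInt_opp C_R_NormedModule).
  apply (@is_RInt_comp_opp C_R_NormedModule). apply CInt_correct; auto.
Qed.

Lemma CInt_swap (f : R -> C) a b : ex_RInt (V:=C_R_CompleteNormedModule) f a b -> - CInt f a b = CInt f b a.
Proof. intro H. unfold CInt. apply (@opp_RInt_swap C_R_CompleteNormedModule); auto. Qed.

Lemma Ccont2_split (F : R -> R -> C) x t : Ccont2 F x t <->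
  continuity_2d_pt (fun u v => fst (F u v)) x t /\ continuity_2d_pt (fun u v => snd (F u v)) x t.
Proof.
  unfold Ccont2; rewrite !continuity_2d_pt_filterlim; split.
  - intro H; split.
    + apply (continuous_comp (fun p : R * R => F (fst p) (snd p)) (fun z : C => fst z)); auto.
      simpl. destruct (F x t); apply (@continuous_fst R_UniformSpace R_UniformSpace).
    + apply (continuous_comp (fun p : R * R => F (fst p) (snd p)) (fun z : C => snd z)); auto.
      simpl. destruct (F x t); apply (@continuous_snd R_UniformSpace R_UniformSpace).
  - intros [H1 H2].
    apply (continuous_ext (fun p : R * R => (fst (F (fst p) (snd p)), snd (F (fst p) (snd p))) : C)).
    { intros p; symmetry; apply surjective_pairing. }
    apply (@continuous_comp_2 (prod_UniformSpace R_UniformSpace R_UniformSpace) R_UniformSpace R_UniformSpace C_R_NormedModule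
      (fun p => fst (F (fst p) (snd p))) (fun p => snd (F (fst p) (snd p))) (fun a b => (a,b))); auto.
    apply (continuous_ext (fun x => x)). { intros [u v]; reflexivity. }
    apply continuous_id.
Qed.

Lemma cont2d_snd (F : R -> R -> R) y z : continuity_2d_pt F y z -> continuous (fun t => F y t) z.
Proof.
  rewrite continuity_2d_pt_filterlim. intro H.
  apply (continuous_comp (fun t => (y, t)) (fun p : R * R => F (fst p) (snd p))); [|exact H].
  apply (continuous_comp_2 (fun _ => y) (fun t => t) (fun a b => (a, b))).
  apply continuous_const. apply continuous_id.
  apply (continuous_ext (fun x => x)). { intros [u v]; reflexivity. }
  apply continuous_id.
Qed.

Lemma locally_2d_forall (P : R -> R -> Prop) x y : (forall u v, P u v) -> locally_2d P x y.
Proof. intro H. exists (mkposreal 1 Rlt_0_1). intros; apply H. Qed.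

Lemma param_real (F Fx : R -> R -> R) :
  (forall x t, is_derive (fun y => F y t) x (Fx x t)) ->
  (forall x t, continuity_2d_pt F x t) -> (forall x t, continuity_2d_pt Fx x t) ->
  forall x, is_derive (fun y => RInt (F y) (- y) y) x (RInt (Fx x) (- x) x + F x (- x) + F x x)%R.
Proof.
  intros HD HF HFx x.
  assert (HI : forall y a b, ex_RInt (F y) a b).
  { intros. apply (@ex_RInt_continuous R_CompleteNormedModule). intros; apply cont2d_snd; auto. }
  assert (HDer : forall u v, Derive (fun z => F z v) u = Fx u v).
  { intros; apply is_derive_unique; auto. }
  assert (HC : forall u v, continuity_2d_pt (fun u v => Derive (fun z => F z v) u) u v).
  { intros. eapply continuity_2d_pt_ext; [|apply (HFx u v)]. intros; simpl. rewrite HDer; auto. }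
  pose proof (is_derive_RInt_param_bound_comp F Ropp (fun y => y) x (-1) 1) as P.
  match type of P with _ -> _ -> _ -> _ -> _ -> _ -> _ -> _ -> _ -> _ -> _ -> is_derive _ _ ?V =>
    replace (RInt (Fx x) (- x) x + F x (- x) + F x x)%R with V end.
  - apply P.
    + apply filter_forall; intros; apply HI.
    + exists (mkposreal 1 Rlt_0_1). apply filter_forall; intros; apply HI.
    + exists (mkposreal 1 Rlt_0_1). apply filter_forall; intros; apply HI.
    + apply (is_derive_ext (fun y => - y)%R). reflexivity. auto_derive; auto; ring.
    + auto_derive; auto.
    + exists (mkposreal 1 Rlt_0_1). apply filter_forall; intros. exists (Fx x0 t); auto.
    + intros; apply HC.
    + apply locally_2d_forall; intros; apply HC.
    + apply locally_2d_forall; intros; apply HC.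
    + apply continuity_pt_filterlim. apply cont2d_snd; auto.
    + apply continuity_pt_filterlim. apply cont2d_snd; auto.
  - rewrite (RInt_ext (fun t => Derive (fun u => F u t) x) (Fx x)).
    ring. intros; apply HDer.
Qed.

Lemma CInt_split_eq (f : R -> C) a b : ex_RInt (V:=C_R_CompleteNormedModule) f a b ->
  CInt f a b = (RInt (fun t => fst (f t)) a b, RInt (fun t => snd (f t)) a b).
Proof.
  intro H. pose proof (CInt_correct f a b H) as I. apply is_CInt_split in I.
  destruct I as [I1 I2]. apply (@is_RInt_unique R_CompleteNormedModule) in I1. apply (@is_RInt_unique R_CompleteNormedModule) in I2.
  rewrite I1, I2. apply surjective_pairing.
Qed.

Lemma Ccont2_snd (F : R -> R -> C) y z : Ccont2 F y z -> Ccont (fun t => F y t) z.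
Proof.
  intro H. apply Ccont2_split in H. destruct H as [H1 H2]. apply Ccont_split; split.
  apply (cont2d_snd (fun u v => fst (F u v))); auto. apply (cont2d_snd (fun u v => snd (F u v))); auto.
Qed.

Lemma param_C (F Fx : R -> R -> C) :
  (forall x t, CDeriv (fun y => F y t) x (Fx x t)) ->
  (forall x t, Ccont2 F x t) -> (forall x t, Ccont2 Fx x t) ->
  forall x, CDeriv (fun y => CInt (F y) (- y)%R y) x (CInt (Fx x) (- x)%R x + F x (- x)%R + F x x).
Proof.
  intros HD HF HFx x.
  assert (HI : forall G, (forall x t, Ccont2 G x t) -> forall y a b, ex_RInt (V:=C_R_CompleteNormedModule) (G y) a b).
  { intros G HG y a b. apply Cex_int. intros; apply Ccont2_snd; auto. }
  apply (CDeriv_ext (fun y => (RInt (fun t => fst (F y t)) (- y)%R y, RInt (fun t => snd (F y t)) (- y)%R y))).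
  { intros y. rewrite CInt_split_eq; auto. }
  rewrite (CInt_split_eq (Fx x)); auto.
  apply CDeriv_split; simpl; split.
  - apply (param_real (fun u v => fst (F u v)) (fun u v => fst (Fx u v))).
    + intros; apply CDeriv_split; auto.
    + intros; apply Ccont2_split; auto.
    + intros; apply Ccont2_split; auto.
  - apply (param_real (fun u v => snd (F u v)) (fun u v => snd (Fx u v))).
    + intros; apply CDeriv_split; auto.
    + intros; apply Ccont2_split; auto.
    + intros; apply Ccont2_split; auto.
Qed.

Lemma cont2d_of_1 (w : R -> R) x t : continuous w t -> continuity_2d_pt (fun _ v => w v) x t.
Proof.
  intro H. apply (continuity_1d_2d_pt_comp w (fun _ v => v)).
  apply continuity_pt_filterlim; auto. apply continuity_2d_pt_id2.
Qed.

Lemma Ccont2_mult1 (K : R -> R -> C) (w : R -> C) x t : Ccont2 K x t -> Ccont w t ->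
  Ccont2 (fun x t => K x t * w t) x t.
Proof.
  intros H1 H2. apply Ccont2_split in H1. apply Ccont_split in H2.
  destruct H1 as [A B]; destruct H2 as [C1 D].
  apply Ccont2_split; simpl; split.
  - apply continuity_2d_pt_minus; apply continuity_2d_pt_mult; auto; apply cont2d_of_1; auto.
  - apply continuity_2d_pt_plus; apply continuity_2d_pt_mult; auto; apply cont2d_of_1; auto.
Qed.

Lemma CDeriv_int_up (g : R -> C) c x : (forall z, Ccont g z) -> CDeriv (fun y => CInt g c y) x (g x).
Proof.
  intro H. unfold CDeriv. apply (@is_derive_RInt C_R_NormedModule g (fun y => CInt g c y) c x).
  - apply filter_forall. intro y. apply CInt_correct. apply Cex_int; auto.
  - apply H.
Qed.

Lemma CDeriv_int_sym (g : R -> C) x : (forall z, Ccont g z) ->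
  CDeriv (fun y => CInt g (- y)%R y) x (g x + g (- x)%R).
Proof.
  intro H. unfold CDeriv.
  pose proof (@is_derive_RInt_bound_comp C_R_NormedModule g (fun a b => CInt g a b) Ropp (fun y => y) (-1)%R 1%R x) as P.
  match type of P with _ -> _ -> _ -> _ -> _ -> is_derive _ _ ?V => replace (g x + g (- x)%R) with V end.
  - apply P.
    + apply filter_forall. intro y. apply CInt_correct. apply Cex_int; auto.
    + apply H.
    + apply H.
    + apply (is_derive_ext (fun y => - y)%R). reflexivity. auto_derive; auto; ring.
    + auto_derive; auto.
  - rewrite minus_C, !scal_C. simpl. destruct (g x), (g (-x)%R); unfold RtoC, Cmult, Cminus, Cplus, Copp; simpl; f_equal; ring.
Qed.

Lemma chain2_real (F Fx Ft : R -> R -> R) :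
  (forall x t, is_derive (fun y => F y t) x (Fx x t)) ->
  (forall x t, is_derive (fun s => F x s) t (Ft x t)) ->
  (forall x t, continuity_2d_pt Fx x t) ->
  forall x (g : R -> R) dg, is_derive g x dg ->
  is_derive (fun y => F y (g y)) x (Fx x (g x) + dg * Ft x (g x))%R.
Proof.
  intros HDx HDt HC x g dg Hg.
  assert (FD := is_derive_filterdiff F x (g x) Fx (Ft x (g x))
     (filter_forall _ (fun u => HDx (fst u) (snd u))) (HDt x (g x))
     (proj1 (continuity_2d_pt_filterlim Fx x (g x)) (HC x (g x)))).
  assert (HH : filterdiff (fun y : R => (y, g y) : prod_NormedModule R_AbsRing R_NormedModule R_NormedModule) (locally x)
     (fun y => (scal y 1%R, scal y dg) : prod_NormedModule R_AbsRing R_NormedModule R_NormedModule)).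
  { refine (@filterdiff_comp_2 R_AbsRing R_NormedModule R_NormedModule R_NormedModule (prod_NormedModule R_AbsRing R_NormedModule R_NormedModule) (locally x) _
       (fun y => y) g (fun a b => (a,b)) (fun y => scal y 1%R) (fun y => scal y dg) (fun a b => (a,b)) _ Hg _).
    - apply (filterdiff_ext_lin _ (fun y => y)). apply filterdiff_id. intro y; unfold scal; simpl; unfold mult; simpl; symmetry; apply Rmult_1_r.
    - apply filterdiff_linear.
      apply (is_linear_ext (fun t => t)). intro t; destruct t; reflexivity.
      apply is_linear_id. }
  unfold is_derive.
  pose proof (filterdiff_comp' (fun y : R => (y, g y) : prod_NormedModule R_AbsRing R_NormedModule R_NormedModule)
     (fun u : prod_NormedModule R_AbsRing R_NormedModule R_NormedModule => F (fst u) (snd u)) x _ _ HH FD) as D.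
  eapply filterdiff_ext_lin. exact D.
  intro y; simpl. unfold scal; simpl; unfold mult, plus; simpl. ring.
Qed.

Lemma Ccont_plus (f g : R -> C) x : Ccont f x -> Ccont g x -> Ccont (fun y => f y + g y) x.
Proof. intros; unfold Ccont in *. apply (@continuous_plus R_UniformSpace R_AbsRing C_R_NormedModule f g); auto. Qed.
Lemma Ccont_minus (f g : R -> C) x : Ccont f x -> Ccont g x -> Ccont (fun y => f y - g y) x.
Proof. intros; unfold Ccont in *. apply (@continuous_minus R_UniformSpace R_AbsRing C_R_NormedModule f g); auto. Qed.
Lemma Ccont_opp (f : R -> C) x : Ccont f x -> Ccont (fun y => - f y) x.
Proof. intros; unfold Ccont in *. apply (@continuous_opp R_UniformSpace R_AbsRing C_R_NormedModule f); auto. Qed.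
Lemma Ccont_const (c : C) x : Ccont (fun _ => c) x.
Proof. unfold Ccont. apply continuous_const. Qed.
Lemma Ccont_mult (f g : R -> C) x : Ccont f x -> Ccont g x -> Ccont (fun y => f y * g y) x.
Proof.
  intros H1 H2; apply Ccont_split in H1; apply Ccont_split in H2.
  destruct H1 as [A B]; destruct H2 as [C1 D]. apply Ccont_split; simpl; split.
  - apply (@continuous_minus R_UniformSpace R_AbsRing R_NormedModule (fun y => fst (f y) * fst (g y))%R (fun y => snd (f y) * snd (g y))%R);
    apply (@continuous_mult R_UniformSpace R_AbsRing); auto.
  - apply (@continuous_plus R_UniformSpace R_AbsRing R_NormedModule (fun y => fst (f y) * snd (g y))%R (fun y => snd (f y) * fst (g y))%R);
    apply (@continuous_mult R_UniformSpace R_AbsRing); auto.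
Qed.
Lemma Ccont_comp_opp (f : R -> C) x : Ccont f (- x)%R -> Ccont (fun y => f (- y)%R) x.
Proof.
  intro H. unfold Ccont in *. apply (continuous_comp Ropp f); auto.
  apply (continuous_ext (fun y : R => opp y)). reflexivity. apply (@continuous_opp R_UniformSpace R_AbsRing R_NormedModule (fun y => y)), continuous_id.
Qed.

Lemma chain2_C (F Fx Ft : R -> R -> C) :
  (forall x t, CDeriv (fun y => F y t) x (Fx x t)) ->
  (forall x t, CDeriv (fun s => F x s) t (Ft x t)) ->
  (forall x t, Ccont2 Fx x t) ->
  forall x (g : R -> R) dg, is_derive g x dg ->
  CDeriv (fun y => F y (g y)) x (Fx x (g x) + RtoC dg * Ft x (g x)).
Proof.
  intros HDx HDt HC x g dg Hg. apply CDeriv_split; simpl; split.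
  - eapply is_derive_ext. intro; reflexivity.
    replace (fst (Fx x (g x)) + (dg * fst (Ft x (g x)) - 0 * snd (Ft x (g x))))%R
      with (fst (Fx x (g x)) + dg * fst (Ft x (g x)))%R by ring.
    apply (chain2_real (fun u v => fst (F u v)) (fun u v => fst (Fx u v)) (fun u v => fst (Ft u v))); auto.
    + intros; apply CDeriv_split; auto.
    + intros; apply CDeriv_split; auto.
    + intros; apply Ccont2_split; auto.
  - replace (snd (Fx x (g x)) + (dg * snd (Ft x (g x)) + 0 * fst (Ft x (g x))))%R
      with (snd (Fx x (g x)) + dg * snd (Ft x (g x)))%R by ring.
    apply (chain2_real (fun u v => snd (F u v)) (fun u v => snd (Fx u v)) (fun u v => snd (Ft u v))); auto.
    + intros; apply CDeriv_split; auto.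
    + intros; apply CDeriv_split; auto.
    + intros; apply Ccont2_split; auto.
Qed.

Lemma deriv0_const (H : R -> C) a : (forall x, (- a <= x <= a)%R -> CDeriv H x (RtoC 0)) ->
  forall x, (- a <= x <= a)%R -> H x = H 0%R.
Proof.
  intros HD x Hx.
  assert (E : forall c d, (- a <= c)%R -> (c < d)%R -> (d <= a)%R -> H c = H d).
  { intros c d H1 H2 H3. apply (@eq_is_derive C_R_NormedModule). 2: auto.
    intros t Ht. apply HD. lra. }
  destruct (Rtotal_order x 0) as [L|[L|L]].
  - apply E; lra.
  - subst; reflexivity.
  - symmetry; apply E; lra.
Qed.

Lemma deriv_agree_real (h : R -> R) a x l : (0 < a)%R -> (forall y, (- a <= y <= a)%R -> h y = 0%R) ->
  (- a <= x <= a)%R -> is_derive h x l -> l = 0%R.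
Proof.
  intros Ha H0 Hx D. apply is_derive_Reals in D.
  apply Rabs_eq_0. apply Rle_antisym; [|apply Rabs_pos].
  apply le_epsilon. intros eps Heps.
  destruct (D eps Heps) as [d Hd].
  set (e := Rmin (d/2) a).
  assert (He : (0 < e)%R). { unfold e. apply Rmin_pos; destruct d; simpl; lra. }
  assert (He2 : (e < d)%R). { unfold e. eapply Rle_lt_trans. apply Rmin_l. destruct d; simpl; lra. }
  assert (Hea : (e <= a)%R) by (unfold e; apply Rmin_r).
  destruct (Rle_lt_dec x 0) as [L|L].
  - assert (Q := Hd e (Rgt_not_eq _ _ He) ltac:(rewrite Rabs_pos_eq; lra)).
    rewrite (H0 x), (H0 (x + e)%R) in Q by lra.
    replace ((0 - 0) / e - l)%R with (- l)%R in Q by (field; lra).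
    rewrite Rabs_Ropp in Q. lra.
  - assert (Q := Hd (- e)%R ltac:(intro; lra) ltac:(rewrite Rabs_Ropp, Rabs_pos_eq; lra)).
    rewrite (H0 x), (H0 (x + - e)%R) in Q by lra.
    replace ((0 - 0) / - e - l)%R with (- l)%R in Q by (field; lra).
    rewrite Rabs_Ropp in Q. lra.
Qed.

Lemma deriv_agree (F G : R -> C) a x l1 l2 : (0 < a)%R -> (forall y, (- a <= y <= a)%R -> F y = G y) ->
  (- a <= x <= a)%R -> CDeriv F x l1 -> CDeriv G x l2 -> l1 = l2.
Proof.
  intros Ha HE Hx D1 D2.
  pose proof (CDeriv_minus F G x l1 l2 D1 D2) as D. apply CDeriv_split in D. destruct D as [A B].
  apply (deriv_agree_real _ a x _ Ha) in A; auto.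
  apply (deriv_agree_real _ a x _ Ha) in B; auto.
  - destruct l1, l2; simpl in *. f_equal; lra.
  - intros y Hy; rewrite HE; auto; simpl; ring.
  - intros y Hy; rewrite HE; auto; simpl; ring.
Qed.

Lemma ball_R (x e y : R) : ball x e y -> (Rabs (y - x) < e)%R.
Proof. intro H. exact H. Qed.

Lemma locally_interval (b x : R) : (- b < x < b)%R -> locally x (fun y => (- b < y < b)%R).
Proof.
  intro Hx. assert (He : (0 < Rmin (x + b) (b - x))%R) by (apply Rmin_pos; lra).
  exists (mkposreal _ He). intros y Hy. apply ball_R in Hy. simpl in Hy.
  pose proof (Rmin_l (x + b) (b - x)). pose proof (Rmin_r (x + b) (b - x)).
  apply Rabs_def2 in Hy. lra.
Qed.

Lemma nz_near_real (g : R -> R) x0 : continuous g x0 -> g x0 <> 0%R ->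
  exists d, (0 < d)%R /\ forall y, (Rabs (y - x0) < d)%R -> g y <> 0%R.
Proof.
  intros H N. assert (Hp : (0 < Rabs (g x0))%R) by (apply Rabs_pos_lt; auto).
  pose proof (proj1 (filterlim_locally g (g x0)) H (mkposreal _ Hp)) as L.
  destruct L as [d Hd]. exists d; split; [destruct d; auto|].
  intros y Hy E. specialize (Hd y Hy). apply ball_R in Hd. simpl in Hd.
  rewrite E in Hd. rewrite Rminus_0_l, Rabs_Ropp in Hd. lra.
Qed.

Lemma nz_near (f : R -> C) x0 : Ccont f x0 -> f x0 <> RtoC 0 ->
  exists d, (0 < d)%R /\ forall y, (Rabs (y - x0) < d)%R -> f y <> RtoC 0.
Proof.
  intros H N. apply Ccont_split in H. destruct H as [H1 H2].
  destruct (Req_dec (fst (f x0)) 0) as [E|E].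
  - assert (E2 : snd (f x0) <> 0%R).
    { intro E2. apply N. destruct (f x0); simpl in *; subst; reflexivity. }
    destruct (nz_near_real _ _ H2 E2) as [d [Hd1 Hd2]]. exists d; split; auto.
    intros y Hy E3. apply (Hd2 y Hy). rewrite E3; reflexivity.
  - destruct (nz_near_real _ _ H1 E) as [d [Hd1 Hd2]]. exists d; split; auto.
    intros y Hy E3. apply (Hd2 y Hy). rewrite E3; reflexivity.
Qed.

Lemma loc_int (g : R -> C) b x : (forall z, (- b < z < b)%R -> Ccont g z) -> (- b < 0 < b)%R -> (- b < x < b)%R ->
  locally x (fun y => @is_RInt C_R_NormedModule g 0 y (CInt g 0 y)).
Proof.
  intros Hg H0 Hx. eapply filter_imp; [|apply (locally_interval b x Hx)].
  intros y Hy. apply CInt_correct. apply Cex_int. intros z Hz. apply Hg.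
  destruct (Rle_dec 0 y).
  - rewrite Rmin_left, Rmax_right in Hz by lra. lra.
  - rewrite Rmin_right, Rmax_left in Hz by lra. lra.
Qed.

Lemma chain_deriv (b : R) (X : nat -> R -> C) (w : nat -> R -> C) :
  (0 < b)%R -> (forall m x, (- b < x < b)%R -> Ccont (w m) x) ->
  (forall x, X 0%nat x = RtoC 1) ->
  (forall m x, X (S m) x = RtoC (INR (S m)) * CInt (fun s => X m s * w m s) 0 x) ->
  forall m x, (- b < x < b)%R ->
    CDeriv (X (S m)) x (RtoC (INR (S m)) * (X m x * w m x)) /\ Ccont (X m) x.
Proof.
  intros Hb Hw H0 HS.
  assert (D : forall m, (forall z, (- b < z < b)%R -> Ccont (X m) z) ->
     forall x, (- b < x < b)%R -> CDeriv (X (S m)) x (RtoC (INR (S m)) * (X m x * w m x))).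
  { intros m Hc x Hx.
    apply (CDeriv_ext (fun y => RtoC (INR (S m)) * CInt (fun s => X m s * w m s) 0 y)).
    { intro; rewrite HS; auto. }
    replace (RtoC (INR (S m)) * (X m x * w m x)) with
      (RtoC 0 * CInt (fun s => X m s * w m s) 0 x + RtoC (INR (S m)) * (X m x * w m x)) by ring.
    apply (CDeriv_mult (fun _ => RtoC (INR (S m))) (fun y => CInt (fun s => X m s * w m s) 0 y)). apply CDeriv_const.
    unfold CDeriv. apply (@is_derive_RInt C_R_NormedModule (fun s => X m s * w m s) _ 0 x).
    - apply (loc_int _ b); auto. intros; apply Ccont_mult; auto. lra.
    - apply Ccont_mult; auto. }
  assert (C : forall m z, (- b < z < b)%R -> Ccont (X m) z).
  { induction m; intros z Hz.
    - eapply (continuous_ext (fun _ => RtoC 1)). intro; rewrite H0; auto. apply continuous_const.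
    - eapply CDeriv_cont. apply D; auto. }
  intros m x Hx. split; auto.
Qed.

Lemma ode_ident (a : R) (q f f1 f2 P P1 P2 r A B : R -> C) :
  (0 < a)%R ->
  (forall x, CDeriv f x (f1 x)) -> (forall x, CDeriv f1 x (f2 x)) ->
  (forall x, (- a <= x <= a)%R -> f2 x = q x * f x) ->
  (forall x, (- a <= x <= a)%R -> f x <> RtoC 0) ->
  (forall x, CDeriv P x (P1 x)) -> (forall x, CDeriv P1 x (P2 x)) ->
  (forall x, (- a <= x <= a)%R -> P2 x = q x * P x + f x * r x) ->
  (forall x, (- a <= x <= a)%R -> CDeriv A x (f x * f x * r x)) ->
  A 0%R = P1 0%R * f 0%R - P 0%R * f1 0%R ->
  (forall x, (- a <= x <= a)%R -> CDeriv B x (A x / (f x * f x))) ->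
  B 0%R = P 0%R / f 0%R ->
  forall x, (- a <= x <= a)%R -> P x = f x * B x.
Proof.
  intros Ha Df Df1 Hf2 Hnz DP DP1 HP2 DA A0 DB B0.
  assert (H0 : (- a <= 0 <= a)%R) by lra.
  assert (EW : forall x, (- a <= x <= a)%R -> P1 x * f x - P x * f1 x - A x = RtoC 0).
  { intros x Hx.
    assert (C := deriv0_const (fun x => P1 x * f x - P x * f1 x - A x) a).
    rewrite C; auto. rewrite A0; ring.
    intros y Hy.
    pose proof (CDeriv_minus _ _ y _ _ (CDeriv_minus _ _ y _ _ (CDeriv_mult _ _ y _ _ (DP1 y) (Df y))
                  (CDeriv_mult _ _ y _ _ (DP y) (Df1 y))) (DA y Hy)) as D.
    match type of D with CDeriv _ _ ?V => replace (RtoC 0) with V; [exact D|] end.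
    rewrite HP2, Hf2; auto. ring. }
  assert (EZ : forall x, (- a <= x <= a)%R -> P x * / f x - B x = RtoC 0).
  { intros x Hx.
    assert (C := deriv0_const (fun x => P x * / f x - B x) a).
    rewrite C; auto. rewrite B0. unfold Cdiv. ring.
    intros y Hy.
    pose proof (CDeriv_minus _ _ y _ _ (CDeriv_mult _ _ y _ _ (DP y) (CDeriv_inv f y _ (Df y) (Hnz y Hy)))
                  (DB y Hy)) as D.
    match type of D with CDeriv _ _ ?V => replace (RtoC 0) with V; [exact D|] end.
    specialize (EW y Hy). specialize (Hnz y Hy).
    replace (A y) with (P1 y * f y - P y * f1 y) by (rewrite <- (Cplus_0_r (A y)), <- EW; ring).
    field. auto. }
  intros x Hx. specialize (EZ x Hx). specialize (Hnz x Hx).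
  replace (B x) with (P x * / f x) by (rewrite <- (Cplus_0_r (B x)), <- EZ; ring).
  field; auto.
Qed.

Definition T0 (K : R -> R -> C) (w : R -> C) (x : R) : C :=
  w x + CInt (fun t => K x t * w t) (- x) x.
Definition Sop (h : C) (u : R -> C) (t : R) : C :=
  u t + h / 2 * CInt u (- t) t.

Lemma CDeriv_int_low (g : R -> C) c x : (forall z, Ccont g z) -> CDeriv (fun y => CInt g y c) x (- g x).
Proof.
  intro H. unfold CDeriv. apply (@is_derive_RInt' C_R_NormedModule g (fun y => CInt g y c) x c).
  - apply filter_forall. intro y. apply CInt_correct. apply Cex_int; auto.
  - apply H.
Qed.

Ltac cc := intros; repeat match goal with
 | |- Ccont (fun y => _ * _) _ => apply Ccont_mult
 | |- Ccont (fun y => _ + _) _ => apply Ccont_plus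
 | |- Ccont (fun y => _ - _) _ => apply Ccont_minus
 | |- Ccont (fun y => - _) _ => apply Ccont_opp
 | |- Ccont (fun _ => _) _ => apply Ccont_const
 end; auto.

Lemma CInt_sym (phi : R -> C) x : (forall z, Ccont phi z) ->
  CInt (fun t => phi (- t)%R) (- x) x = CInt phi (- x) x.
Proof.
  intro H. rewrite CInt_comp_opp. rewrite Ropp_involutive. apply CInt_swap.
  apply Cex_int; auto. rewrite Ropp_involutive. apply Cex_int; auto.
Qed.

Lemma Top_eq (K : R -> R -> C) (h : C) (u : R -> C) :
  (forall x t, Ccont2 K x t) -> (forall z, Ccont u z) ->
  forall x, Top K h u x = T0 K (Sop h u) x.
Proof.
  intros HK Hu x.
  assert (HKx : forall z, Ccont (fun t => K x t) z) by (intros; apply Ccont2_snd; auto).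
  set (g := fun s => K x s - K x (- s)%R).
  assert (Hg : forall z, Ccont g z) by (intros; unfold g; apply Ccont_minus; [auto| apply Ccont_comp_opp; auto]).
  set (I := fun t => CInt g t x).
  assert (HI : forall z, Ccont I z) by (intros; eapply CDeriv_cont; apply CDeriv_int_low; auto).
  set (U0 := fun t => CInt u 0 t).
  assert (HU0 : forall z, Ccont U0 z) by (intros; eapply CDeriv_cont; apply CDeriv_int_up; auto).
  assert (HS : forall z, Ccont (fun t => CInt u (- t)%R t) z) by (intros; eapply CDeriv_cont; apply CDeriv_int_sym; auto).
  assert (Ex : forall (F : R -> C), (forall z, Ccont F z) -> forall a b, ex_RInt (V:=C_R_CompleteNormedModule) F a b).
  { intros; apply Cex_int; auto. }
  assert (Eb : CInt (fun t => boldK K h x t * u t) (- x) x =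
     h / 2 * CInt u (- x) x + CInt (fun t => K x t * u t) (- x) x + h / 2 * CInt (fun t => I t * u t) (- x) x).
  { rewrite <- (CInt_scalC u) by (apply Ex; cc).
    rewrite <- (CInt_scalC (fun t => I t * u t)) by (apply Ex; cc).
    rewrite <- CInt_plus by (apply Ex; cc).
    rewrite <- CInt_plus by (apply Ex; cc).
    apply CInt_ext. intros t _. unfold boldK, I, g. ring. }
  assert (Ec : CInt (fun t => I t * u t) (- x) x = CInt (fun t => g t * U0 t) (- x) x).
  { assert (F := CInt_FTC (fun t => I t * U0 t) (fun t => - g t * U0 t + I t * u t) (- x) x).
    rewrite CInt_plus in F by (apply Ex; cc).
    assert (I0 : I x = RtoC 0) by (unfold I; apply CInt_point).
    assert (I1 : I (- x)%R = RtoC 0).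
    { unfold I, g. rewrite CInt_minus by (apply Ex; cc; apply Ccont_comp_opp; auto).
      rewrite (CInt_sym (K x)); [ring | auto]. }
    rewrite I0, I1 in F.
    rewrite (CInt_ext (fun t => - g t * U0 t) (fun t => - (g t * U0 t))) in F by (intros; ring).
    rewrite CInt_opp in F by (apply Ex; cc).
    assert (F' : - CInt (fun t => g t * U0 t) (- x) x + CInt (fun t => I t * u t) (- x) x = RtoC 0).
    { rewrite F. ring.
      - intros y _. apply CDeriv_mult. apply CDeriv_int_low; auto. apply CDeriv_int_up; auto.
      - intros; cc. }
    rewrite <- (Cplus_0_l (CInt (fun t => g t * U0 t) (- x) x)), <- F'. ring. }
  assert (Ed : CInt (fun t => g t * U0 t) (- x) x = CInt (fun t => K x t * CInt u (- t)%R t) (- x) x).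
  { rewrite (CInt_ext (fun t => g t * U0 t) (fun t => K x t * U0 t - K x (- t)%R * U0 t)) by (intros; unfold g; ring).
    rewrite CInt_minus by (apply Ex; cc; apply Ccont_comp_opp; auto).
    rewrite (CInt_ext (fun t => K x (- t)%R * U0 t) (fun t => K x (- t)%R * U0 (- - t)%R))
      by (intros; rewrite Ropp_involutive; reflexivity).
    assert (E := CInt_sym (fun s => K x s * U0 (- s)%R) x). cbv beta in E.
    rewrite E by (intros; cc; apply Ccont_comp_opp; auto).
    rewrite <- CInt_minus by (apply Ex; cc; apply Ccont_comp_opp; auto).
    apply CInt_ext. intros t _. unfold U0.
    rewrite <- (CInt_Chasles u (- t)%R 0 t) by (apply Ex; auto).
    rewrite <- (CInt_swap u 0 (- t)%R) by (apply Ex; auto). ring. }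
  unfold Top, T0, Sop. rewrite Eb, Ec, Ed.
  rewrite (CInt_ext (fun t => K x t * (u t + h / 2 * CInt u (- t)%R t))
     (fun t => K x t * u t + h / 2 * (K x t * CInt u (- t)%R t))) by (intros; ring).
  rewrite CInt_plus by (apply Ex; cc).
  rewrite CInt_scalC by (apply Ex; cc). ring.
Qed.


Lemma RtoC_m1 : RtoC (-1) = - RtoC 1.
Proof. unfold RtoC, Copp; simpl; f_equal; ring. Qed.

Definition G1 (K Kx : R -> R -> C) (w : R -> C) x :=
  CInt (fun t => Kx x t * w t) (- x) x + K x (- x)%R * w (- x)%R + K x x * w x.

Definition G2 (K Kx Kt Kxx : R -> R -> C) (w w1 : R -> C) x :=
  CInt (fun t => Kxx x t * w t) (- x) x + Kx x (- x)%R * w (- x)%R + Kx x x * w x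
  + ((Kx x (- x)%R - Kt x (- x)%R) * w (- x)%R - K x (- x)%R * w1 (- x)%R)
  + ((Kx x x + Kt x x) * w x + K x x * w1 x).

Lemma T0_d1 (K Kx : R -> R -> C) (w : R -> C) :
  (forall x t, CDeriv (fun y => K y t) x (Kx x t)) ->
  (forall x t, Ccont2 K x t) -> (forall x t, Ccont2 Kx x t) -> (forall z, Ccont w z) ->
  forall w1, (forall x, CDeriv w x (w1 x)) ->
  forall x, CDeriv (T0 K w) x (w1 x + G1 K Kx w x).
Proof.
  intros HKx CK CKx Cw w1 Dw x. unfold T0, G1.
  apply CDeriv_plus; auto.
  apply (param_C (fun y t => K y t * w t) (fun y t => Kx y t * w t)).
  - intros; replace (Kx x0 t * w t) with (Kx x0 t * w t + K x0 t * RtoC 0) by ring.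
    apply (CDeriv_mult (fun y => K y t) (fun _ => w t)); auto. apply CDeriv_const.
  - intros; apply Ccont2_mult1; auto.
  - intros; apply Ccont2_mult1; auto.
Qed.

Lemma T0_d2 (K Kx Kt Kxx : R -> R -> C) (w w1 w2 : R -> C) :
  (forall x t, CDeriv (fun y => K y t) x (Kx x t)) ->
  (forall x t, CDeriv (fun s => K x s) t (Kt x t)) ->
  (forall x t, CDeriv (fun y => Kx y t) x (Kxx x t)) ->
  (forall x t, Ccont2 K x t) -> (forall x t, Ccont2 Kx x t) -> (forall x t, Ccont2 Kxx x t) ->
  (forall x, CDeriv w x (w1 x)) -> (forall x, CDeriv w1 x (w2 x)) ->
  forall x, CDeriv (fun y => w1 y + G1 K Kx w y) x (w2 x + G2 K Kx Kt Kxx w w1 x).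
Proof.
  intros HKx HKt HKxx CK CKx CKxx Dw Dw1 x.
  assert (Cw : forall z, Ccont w z) by (intros; eapply CDeriv_cont; eauto).
  unfold G1, G2.
  apply CDeriv_plus; auto.
  assert (D1' : forall x0 t, CDeriv (fun y => Kx y t * w t) x0 (Kxx x0 t * w t)).
  { intros; replace (Kxx x0 t * w t) with (Kxx x0 t * w t + Kx x0 t * RtoC 0) by ring.
    apply (CDeriv_mult (fun y => Kx y t) (fun _ => w t)); auto; apply CDeriv_const. }
  assert (D1 := param_C (fun y t => Kx y t * w t) (fun y t => Kxx y t * w t) D1'
     ltac:(intros; apply Ccont2_mult1; auto) ltac:(intros; apply Ccont2_mult1; auto) x).
  cbv beta in D1.
  assert (D2 := chain2_C K Kx Kt HKx HKt CKx x Ropp (-1)%R).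
  assert (D3 := chain2_C K Kx Kt HKx HKt CKx x (fun y => y) 1%R).
  assert (Dm : is_derive Ropp x (-1)%R).
  { apply (is_derive_ext (fun y => - y)%R). reflexivity. auto_derive; auto; ring. }
  assert (Di : is_derive (fun y : R => y) x 1%R) by (auto_derive; auto).
  specialize (D2 Dm). specialize (D3 Di). simpl in D3.
  assert (Dwm := CDeriv_comp w Ropp x _ _ (Dw (- x)%R) Dm).
  pose proof (CDeriv_plus _ _ x _ _
    (CDeriv_plus _ _ x _ _ D1
       (CDeriv_mult _ _ x _ _ D2 Dwm))
    (CDeriv_mult _ _ x _ _ D3 (Dw x))) as D.
  match type of D with CDeriv _ _ ?V => replace (CInt (fun t => Kxx x t * w t) (- x) x + Kx x (- x)%R * w (- x)%R + Kx x x * w x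
  + ((Kx x (- x)%R - Kt x (- x)%R) * w (- x)%R - K x (- x)%R * w1 (- x)%R)
  + ((Kx x x + Kt x x) * w x + K x x * w1 x)) with V end.
  - exact D.
  - rewrite RtoC_m1. ring.
Qed.

Lemma RtoC_2 : RtoC 2 = RtoC 1 + RtoC 1.
Proof. unfold RtoC, Cplus; simpl; f_equal; ring. Qed.

Lemma T0_inter (K Kx Kt Kxx Ktt : R -> R -> C) (w w1 w2 q : R -> C) x :
  (forall x t, CDeriv (fun s => K x s) t (Kt x t)) ->
  (forall x t, CDeriv (fun s => Kt x s) t (Ktt x t)) ->
  (forall x t, Ccont2 K x t) -> (forall x t, Ccont2 Kt x t) ->
  (forall x t, Ccont2 Kxx x t) -> (forall x t, Ccont2 Ktt x t) ->
  (forall x, CDeriv w x (w1 x)) -> (forall x, CDeriv w1 x (w2 x)) -> (forall z, Ccont w2 z) ->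
  (forall t, (Rmin (- x) x < t < Rmax (- x) x)%R -> Kxx x t - q x * K x t = Ktt x t) ->
  RtoC 2 * (Kx x x + Kt x x) = q x ->
  Kx x (- x)%R = Kt x (- x)%R ->
  - (w2 x + G2 K Kx Kt Kxx w w1 x) + q x * T0 K w x = T0 K (fun t => - w2 t) x.
Proof.
  intros HKt HKtt CK CKt CKxx CKtt Dw Dw1 Cw2 Hpde Hd1 Hd2.
  assert (Cw : forall z, Ccont w z) by (intros; eapply CDeriv_cont; eauto).
  assert (Cw1 : forall z, Ccont w1 z) by (intros; eapply CDeriv_cont; eauto).
  assert (C1 : forall (F : R -> R -> C), (forall x t, Ccont2 F x t) -> forall z, Ccont (fun t => F x t) z).
  { intros; apply Ccont2_snd; auto. }
  assert (Ex : forall (F : R -> C), (forall z, Ccont F z) -> forall a b, ex_RInt (V:=C_R_CompleteNormedModule) F a b).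
  { intros; apply Cex_int; auto. }
  assert (CKx := C1 K CK). assert (CKtx := C1 Kt CKt). assert (CKxxx := C1 Kxx CKxx). assert (CKttx := C1 Ktt CKtt).
  assert (IBP : CInt (fun t => K x t * w2 t - Ktt x t * w t) (- x) x =
      (K x x * w1 x - Kt x x * w x) - (K x (- x)%R * w1 (- x)%R - Kt x (- x)%R * w (- x)%R)).
  { apply (CInt_FTC (fun t => K x t * w1 t - Kt x t * w t)).
    - intros t _.
      pose proof (CDeriv_minus _ _ t _ _ (CDeriv_mult _ _ t _ _ (HKt x t) (Dw1 t)) (CDeriv_mult _ _ t _ _ (HKtt x t) (Dw t))) as D.
      match type of D with CDeriv _ _ ?V => replace (K x t * w2 t - Ktt x t * w t) with V; [exact D|] end.
      ring.
    - cc. }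
  rewrite CInt_minus in IBP by (apply Ex; cc).
  assert (PDE : CInt (fun t => Ktt x t * w t) (- x) x =
     CInt (fun t => Kxx x t * w t) (- x) x - q x * CInt (fun t => K x t * w t) (- x) x).
  { rewrite (CInt_ext (fun t => Ktt x t * w t) (fun t => Kxx x t * w t - q x * (K x t * w t))).
    - rewrite CInt_minus by (apply Ex; cc). rewrite CInt_scalC by (apply Ex; cc). reflexivity.
    - intros t Ht. rewrite <- Hpde; auto. ring. }
  unfold T0, G2.
  rewrite (CInt_ext (fun t => K x t * - w2 t) (fun t => - (K x t * w2 t))) by (intros; ring).
  rewrite CInt_opp by (apply Ex; cc).
  assert (E : CInt (fun t => K x t * w2 t) (- x) x =
     CInt (fun t => Ktt x t * w t) (- x) x + ((K x x * w1 x - Kt x x * w x) - (K x (- x)%R * w1 (- x)%R - Kt x (- x)%R * w (- x)%R))).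
  { rewrite <- IBP. ring. }
  rewrite E, PDE. rewrite Hd2. rewrite <- Hd1. rewrite RtoC_2. ring.
Qed.


Lemma is_derive_Ropp x : is_derive Ropp x (-1)%R.
Proof. apply (is_derive_ext (fun y => - y)%R). reflexivity. auto_derive; auto; ring. Qed.

Lemma Sop_d1 h (u u1 : R -> C) : (forall x, CDeriv u x (u1 x)) ->
  forall x, CDeriv (Sop h u) x (u1 x + h / 2 * (u x + u (- x)%R)).
Proof.
  intros Du x. unfold Sop. apply CDeriv_plus; auto.
  replace (h / 2 * (u x + u (- x)%R)) with (RtoC 0 * CInt u (- x) x + h / 2 * (u x + u (- x)%R)) by ring.
  apply (CDeriv_mult (fun _ => h / 2) (fun t => CInt u (- t) t)). apply CDeriv_const.
  apply CDeriv_int_sym. intros; eapply CDeriv_cont; eauto.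
Qed.

Lemma Sop_d2 h (u u1 u2 : R -> C) : (forall x, CDeriv u x (u1 x)) -> (forall x, CDeriv u1 x (u2 x)) ->
  forall x, CDeriv (fun t => u1 t + h / 2 * (u t + u (- t)%R)) x (u2 x + h / 2 * (u1 x - u1 (- x)%R)).
Proof.
  intros Du Du1 x. apply CDeriv_plus; auto.
  pose proof (CDeriv_mult (fun _ => h / 2) (fun t => u t + u (- t)%R) x _ _ (CDeriv_const _ x)
     (CDeriv_plus _ _ x _ _ (Du x) (CDeriv_comp u Ropp x _ _ (Du (- x)%R) (is_derive_Ropp x)))) as D.
  match type of D with CDeriv _ _ ?V => replace (h / 2 * (u1 x - u1 (- x)%R)) with V; [exact D|] end.
  rewrite RtoC_m1. ring.
Qed.

Lemma Sop_neg h (u1 u2 : R -> C) : (forall x, CDeriv u1 x (u2 x)) -> (forall z, Ccont u2 z) ->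
  forall t, Sop h (fun t => - u2 t) t = - (u2 t + h / 2 * (u1 t - u1 (- t)%R)).
Proof.
  intros Du1 Cu2 t. unfold Sop. rewrite CInt_opp by (apply Cex_int; auto).
  rewrite (CInt_FTC u1 u2) by auto. ring.
Qed.

Lemma T0_ext K (w v : R -> C) x : (forall t, w t = v t) -> T0 K w x = T0 K v x.
Proof. intro H. unfold T0. rewrite H. f_equal. apply CInt_ext. intros; rewrite H; auto. Qed.

Lemma abs_between x t : (Rmin (- x) x < t < Rmax (- x) x)%R -> (Rabs t <= Rabs x)%R.
Proof.
  intro H. destruct (Rle_dec 0 x).
  - rewrite Rmin_left, Rmax_right in H by lra. rewrite (Rabs_pos_eq x) by lra.
    apply Rabs_le; lra.
  - rewrite Rmin_right, Rmax_left in H by lra. rewrite (Rabs_left x) by lra.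
    apply Rabs_le; lra.
Qed.

Lemma T_main (a : R) (q : R -> C) (K Kx Kt Kxx Ktt : R -> R -> C) (h : C) (u u1 u2 : R -> C) :
  (0 < a)%R -> (forall z, Ccont q z) ->
  (forall x t, CDeriv (fun y => K y t) x (Kx x t)) ->
  (forall x t, CDeriv (fun s => K x s) t (Kt x t)) ->
  (forall x t, CDeriv (fun y => Kx y t) x (Kxx x t)) ->
  (forall x t, CDeriv (fun s => Kt x s) t (Ktt x t)) ->
  (forall x t, Ccont2 K x t) -> (forall x t, Ccont2 Kx x t) -> (forall x t, Ccont2 Kt x t) ->
  (forall x t, Ccont2 Kxx x t) -> (forall x t, Ccont2 Ktt x t) ->
  (forall x t, (Rabs t <= Rabs x <= a)%R -> Kxx x t - q x * K x t = Ktt x t) ->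
  (forall x, (Rabs x <= a)%R -> K x x = / 2 * CInt q 0 x) ->
  (forall x, (Rabs x <= a)%R -> K x (- x)%R = RtoC 0) ->
  (forall x, CDeriv u x (u1 x)) -> (forall x, CDeriv u1 x (u2 x)) -> (forall z, Ccont u2 z) ->
  let W := Sop h u in
  let W1 := fun t => u1 t + h / 2 * (u t + u (- t)%R) in
  let W2 := fun t => u2 t + h / 2 * (u1 t - u1 (- t)%R) in
  let V1 := fun x => W1 x + G1 K Kx W x in
  let V2 := fun x => W2 x + G2 K Kx Kt Kxx W W1 x in
  (forall x, CDeriv (Top K h u) x (V1 x)) /\ (forall x, CDeriv V1 x (V2 x)) /\
  (forall x, (- a <= x <= a)%R -> - V2 x + q x * Top K h u x = Top K h (fun t => - u2 t) x) /\
  V1 0%R = u1 0%R + h * u 0%R /\ Top K h u 0%R = u 0%R.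
Proof.
  intros Ha Cq HKx HKt HKxx HKtt CK CKx CKt CKxx CKtt Hpde Hdiag Hanti Du Du1 Cu2 W W1 W2 V1 V2.
  assert (Cu : forall z, Ccont u z) by (intros; eapply CDeriv_cont; eauto).
  assert (Cu1 : forall z, Ccont u1 z) by (intros; eapply CDeriv_cont; eauto).
  assert (DW : forall x, CDeriv W x (W1 x)) by (intros; apply Sop_d1; auto).
  assert (DW1 : forall x, CDeriv W1 x (W2 x)) by (intros; apply (Sop_d2 h u u1 u2); auto).
  assert (CW : forall z, Ccont W z) by (intros; eapply CDeriv_cont; eauto).
  assert (CW2 : forall z, Ccont W2 z) by (unfold W2; cc; apply Ccont_comp_opp; auto).
  assert (TE : forall v, (forall z, Ccont v z) -> forall x, Top K h v x = T0 K (Sop h v) x).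
  { intros; apply Top_eq; auto. }
  assert (D1 : forall x, CDeriv (Top K h u) x (V1 x)).
  { intro x. apply (CDeriv_ext (T0 K W)). { intros; rewrite TE; auto. }
    apply T0_d1; auto. }
  split; [exact D1|]. split.
  { intro x. apply T0_d2; auto. }
  split.
  - intros x Hx. assert (Hxa : (Rabs x <= a)%R) by (apply Rabs_le; lra).
    rewrite !TE; auto; [|intros; apply Ccont_opp; auto].
    rewrite (T0_ext K (Sop h (fun t => - u2 t)) (fun t => - W2 t)) by (intros; unfold W2; apply Sop_neg; auto).
    apply (T0_inter K Kx Kt Kxx Ktt); auto.
    + intros t Ht. apply Hpde. split; auto. apply abs_between; auto.
    +
      assert (Dd := chain2_C K Kx Kt HKx HKt CKx x (fun y => y) 1%R ltac:(auto_derive; auto)).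
      assert (Dq : CDeriv (fun y => / 2 * CInt q 0 y) x (/ 2 * q x)).
      { replace (/ 2 * q x) with (RtoC 0 * CInt q 0 x + / 2 * q x) by ring.
        apply (CDeriv_mult (fun _ => / 2) (fun y => CInt q 0 y)). apply CDeriv_const.
        apply CDeriv_int_up; auto. }
      pose proof (deriv_agree (fun y => K y y) (fun y => / 2 * CInt q 0 y) a x _ _ Ha ltac:(intros y Hy; apply Hdiag; apply Rabs_le; lra) Hx Dd Dq) as E.
      simpl in E. replace (Kx x x + Kt x x) with (Kx x x + RtoC 1 * Kt x x) by ring.
      rewrite E. field.
    + assert (Dd := chain2_C K Kx Kt HKx HKt CKx x Ropp (-1)%R (is_derive_Ropp x)).
      pose proof (deriv_agree (fun y => K y (- y)%R) (fun _ => RtoC 0) a x _ _ Ha ltac:(intros y Hy; apply Hanti; apply Rabs_le; lra) Hx Dd (CDeriv_const (RtoC 0) x)) as E.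
      rewrite RtoC_m1 in E.
      replace (Kx x (- x)%R) with (Kx x (- x)%R + - RtoC 1 * Kt x (- x)%R + Kt x (- x)%R) by ring. rewrite E. ring.
  - split.
    + unfold V1, W1, G1, W, Sop. rewrite Ropp_0, !CInt_point.
      assert (K00 : K 0%R 0%R = RtoC 0).
      { rewrite Hdiag. rewrite CInt_point. ring. rewrite Rabs_R0; lra. }
      rewrite K00. field.
    + unfold Top. rewrite Ropp_0, CInt_point. ring.
Qed.


Lemma Top_scal (K : R -> R -> C) h (v : R -> C) c x : (forall x t, Ccont2 K x t) -> (forall z, Ccont v z) ->
  Top K h (fun t => c * v t) x = c * Top K h v x.
Proof.
  intros CK Cv. unfold Top.
  assert (CB : forall z, Ccont (fun t => boldK K h x t) z).
  { intro z. unfold boldK. apply Ccont_plus. apply Ccont_plus. apply Ccont_const. apply Ccont2_snd; auto.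
    apply Ccont_mult. apply Ccont_const. eapply CDeriv_cont. apply CDeriv_int_low.
    intros; apply Ccont_minus. apply Ccont2_snd; auto. apply Ccont_comp_opp. apply Ccont2_snd; auto. }
  rewrite (CInt_ext (fun t => boldK K h x t * (c * v t)) (fun t => c * (boldK K h x t * v t))) by (intros; ring).
  rewrite CInt_scalC. ring. apply Cex_int. intros. apply Ccont_mult; auto.
Qed.

Lemma Cmult_sq_neq0 (z : C) : z <> RtoC 0 -> z * z <> RtoC 0.
Proof.
  intros H E. apply H. replace z with (z * z * / z) by (field; auto). rewrite E. ring.
Qed.

Lemma wgt_cont (f f1 : R -> C) b (e : bool) : (forall x, CDeriv f x (f1 x)) -> (forall y, (- b < y < b)%R -> f y <> RtoC 0) ->
  forall x, (- b < x < b)%R -> Ccont (fun s => if e then / (f s * f s) else f s * f s) x.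
Proof.
  intros Df Nf x Hx. destruct e.
  - eapply CDeriv_cont. apply CDeriv_inv. apply (CDeriv_mult f f x _ _ (Df x) (Df x)).
    apply Cmult_sq_neq0; auto.
  - eapply CDeriv_cont. apply (CDeriv_mult f f x _ _ (Df x) (Df x)).
Qed.

Lemma Xn_deriv (f f1 : R -> C) b : (0 < b)%R -> (forall x, CDeriv f x (f1 x)) -> (forall y, (- b < y < b)%R -> f y <> RtoC 0) ->
  forall m x, (- b < x < b)%R ->
  CDeriv (Xn f 0 (S m)) x (RtoC (INR (S m)) * (Xn f 0 m x * (if Nat.even m then / (f x * f x) else f x * f x))).
Proof.
  intros Hb Df Nf m x Hx.
  apply (chain_deriv b (Xn f 0) (fun m s => if Nat.even m then / (f s * f s) else f s * f s)); auto.
  intros m0 x0 Hx0. apply (wgt_cont f f1 b); auto.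
Qed.

Lemma Xtil_deriv (f f1 : R -> C) b : (0 < b)%R -> (forall x, CDeriv f x (f1 x)) -> (forall y, (- b < y < b)%R -> f y <> RtoC 0) ->
  forall m x, (- b < x < b)%R ->
  CDeriv (Xtil f 0 (S m)) x (RtoC (INR (S m)) * (Xtil f 0 m x * (if Nat.even m then f x * f x else / (f x * f x)))).
Proof.
  intros Hb Df Nf m x Hx.
  apply (chain_deriv b (Xtil f 0) (fun m s => if Nat.even m then f s * f s else / (f s * f s))); auto.
  intros m0 x0 Hx0. destruct (Nat.even m0).
  - apply (wgt_cont f f1 b false); auto.
  - apply (wgt_cont f f1 b true); auto.
Qed.

Lemma Xn_0 f m : Xn f 0 (S m) 0%R = RtoC 0.
Proof. simpl. rewrite CInt_point. ring. Qed.
Lemma Xtil_0 f m : Xtil f 0 (S m) 0%R = RtoC 0.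
Proof. simpl. rewrite CInt_point. ring. Qed.

Lemma exists_b (f : R -> C) a : (0 < a)%R -> (forall z, Ccont f z) -> (forall x, (- a <= x <= a)%R -> f x <> RtoC 0) ->
  exists b, (a < b)%R /\ forall y, (- b < y < b)%R -> f y <> RtoC 0.
Proof.
  intros Ha Cf Nf.
  destruct (nz_near f a (Cf a) (Nf a ltac:(lra))) as [d1 [Hd1 N1]].
  destruct (nz_near f (- a)%R (Cf (- a)%R) (Nf (- a)%R ltac:(lra))) as [d2 [Hd2 N2]].
  exists (a + Rmin d1 d2)%R. pose proof (Rmin_l d1 d2). pose proof (Rmin_r d1 d2).
  assert (0 < Rmin d1 d2)%R by (apply Rmin_pos; auto).
  split; [lra|]. intros y Hy.
  destruct (Rle_dec y a); destruct (Rle_dec (- a) y).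
  - apply Nf; lra.
  - apply N2. rewrite Rabs_left1; lra.
  - apply N1. rewrite Rabs_pos_eq; lra.
  - lra.
Qed.

Lemma pow_d (c : R) (n : nat) x : CDeriv (fun t => RtoC (c * t ^ n)) x (RtoC (c * (INR n * x ^ (n - 1)))).
Proof.
  apply CDeriv_RtoC.
  pose proof (is_derive_pow (fun t => t) n x 1%R ltac:(auto_derive; auto)) as D.
  pose proof (is_derive_scal _ x c _ D) as D2.
  eapply is_derive_ext. 2: { match type of D2 with is_derive _ _ ?V => replace (c * (INR n * x ^ (n - 1)))%R with V; [exact D2|] end.
    unfold scal; simpl; unfold mult; simpl. replace (Init.Nat.pred n) with (n - 1)%nat by lia. ring. }
  intro t; reflexivity.
Qed.

Lemma CDeriv_val (F : R -> C) x l l' : CDeriv F x l -> l = l' -> CDeriv F x l'.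
Proof. intros H E; subst; auto. Qed.

Lemma pow_d1 (k : nat) x : CDeriv (fun t => RtoC (t ^ k)) x (RtoC (INR k * x ^ (k - 1))).
Proof.
  apply (CDeriv_ext (fun t => RtoC (1 * t ^ k))). intro; f_equal; ring.
  eapply CDeriv_val. apply pow_d. f_equal; ring.
Qed.

Lemma pow_d2 (k : nat) x : CDeriv (fun t => RtoC (INR k * t ^ (k - 1))) x (RtoC (INR k * INR (k - 1) * x ^ (k - 2))).
Proof.
  eapply CDeriv_val. apply pow_d. f_equal. replace (k - 1 - 1)%nat with (k - 2)%nat by lia. ring.
Qed.

Theorem mainTheorem4
  (a : R) (ha : (0 < a)%R)
  (q q1 : R -> C) (hq : cfun_C1 q q1)
  (f f1 f2 : R -> C) (hf : cfun_C2 f f1 f2)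
  (hf_eq : forall x, (- a <= x <= a)%R -> f2 x - q x * f x = 0)
  (hf_nz : forall x, (- a <= x <= a)%R -> f x <> 0)
  (hf0 : f 0%R = 1)
  (K Kxx Ktt : R -> R -> C) (hK : cfun2_C2 K Kxx Ktt)
  (hK_pde : forall x t, (Rabs t <= Rabs x <= a)%R ->
       Kxx x t - q x * K x t = Ktt x t)
  (hK_diag : forall x, (Rabs x <= a)%R -> K x x = / 2 * CInt q 0 x)
  (hK_anti : forall x, (Rabs x <= a)%R -> K x (- x)%R = 0) :
  let h := f1 0%R in
  (forall (k : nat) (x : R), (- a <= x <= a)%R ->
     Top K h (fun t => RtoC (t ^ k)) x = phik f 0 k x)
  /\
  (forall u u1 u2 : R -> C, cfun_C2 u u1 u2 ->
     exists v1 v2 : R -> C,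
       (forall x, CDeriv (Top K h u) x (v1 x)) /\
       (forall x, CDeriv v1 x (v2 x)) /\
       (forall x, (- a <= x <= a)%R ->
          - v2 x + q x * Top K h u x = Top K h (fun t => - u2 t) x)).
Proof.
  intros h.
  destruct hq as [Dq _]. assert (Cq : forall z, Ccont q z) by (intros; eapply CDeriv_cont; eauto).
  destruct hf as [Df [Df1 _]]. assert (Cf : forall z, Ccont f z) by (intros; eapply CDeriv_cont; eauto).
  destruct hK as [Kx [Kt [Kxt [Ktx [HKx [HKt [HKxx [HKxt [HKtx [HKtt HC]]]]]]]]]].
  assert (CK : forall x t, Ccont2 K x t) by (intros x t; destruct (HC x t) as [A1 [A2 [A3 [A4 [A5 [A6 A7]]]]]]; assumption).
  assert (CKx : forall x t, Ccont2 Kx x t) by (intros x t; destruct (HC x t) as [A1 [A2 [A3 [A4 [A5 [A6 A7]]]]]]; assumption).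
  assert (CKt : forall x t, Ccont2 Kt x t) by (intros x t; destruct (HC x t) as [A1 [A2 [A3 [A4 [A5 [A6 A7]]]]]]; assumption).
  assert (CKxx : forall x t, Ccont2 Kxx x t) by (intros x t; destruct (HC x t) as [A1 [A2 [A3 [A4 [A5 [A6 A7]]]]]]; assumption).
  assert (CKtt : forall x t, Ccont2 Ktt x t) by (intros x t; destruct (HC x t) as [A1 [A2 [A3 [A4 [A5 [A6 A7]]]]]]; assumption).
  assert (TM : forall u u1 u2 : R -> C, (forall x, CDeriv u x (u1 x)) -> (forall x, CDeriv u1 x (u2 x)) ->
     (forall z, Ccont u2 z) -> exists V1 V2 : R -> C,
       (forall x, CDeriv (Top K h u) x (V1 x)) /\ (forall x, CDeriv V1 x (V2 x)) /\
       (forall x, (- a <= x <= a)%R -> - V2 x + q x * Top K h u x = Top K h (fun t => - u2 t) x) /\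
       V1 0%R = u1 0%R + h * u 0%R /\ Top K h u 0%R = u 0%R).
  { intros u u1 u2 Du Du1 Cu2.
    pose proof (T_main a q K Kx Kt Kxx Ktt h u u1 u2 ha Cq HKx HKt HKxx HKtt CK CKx CKt CKxx CKtt
       hK_pde hK_diag hK_anti Du Du1 Cu2) as T.
    cbv zeta in T. destruct T as [T1 [T2 [T3 [T4 T5]]]].
    eexists; eexists; split; [exact T1|]. split; [exact T2|]. split; [exact T3|]. split; [exact T4|exact T5]. }

  destruct (exists_b f a ha Cf hf_nz) as [b [Hab Nb]].
  assert (Hb : (0 < b)%R) by lra.
  assert (Ina : forall x, (- a <= x <= a)%R -> (- b < x < b)%R) by (intros; lra).
  assert (Hf2 : forall x, (- a <= x <= a)%R -> f2 x = q x * f x).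
  { intros x Hx. specialize (hf_eq x Hx).
    replace (f2 x) with (f2 x - q x * f x + q x * f x) by ring. rewrite hf_eq. ring. }
  assert (Top_ext : forall (u v : R -> C) x, (forall t, u t = v t) -> Top K h u x = Top K h v x).
  { intros u v x Huv. unfold Top. rewrite Huv. f_equal. apply CInt_ext. intros; rewrite Huv; auto. }
  assert (Step : forall k, (forall m, k = S (S m) -> forall x, (- a <= x <= a)%R ->
       Top K h (fun t => RtoC (t ^ m)) x = phik f 0 m x) ->
     forall x, (- a <= x <= a)%R -> Top K h (fun t => RtoC (t ^ k)) x = phik f 0 k x).
  { intros k IH.
    destruct (TM (fun t => RtoC (t ^ k)) (fun t => RtoC (INR k * t ^ (k - 1)))
       (fun t => RtoC (INR k * INR (k - 1) * t ^ (k - 2)))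
       (pow_d1 k) (pow_d2 k) ltac:(intros; eapply CDeriv_cont; apply pow_d)) as [V1 [V2 [D1 [D2 [E [V10 P0]]]]]].
    cbv beta in V10, P0.
    assert (E' : forall x, (- a <= x <= a)%R -> V2 x = q x * Top K h (fun t => RtoC (t ^ k)) x +
        RtoC (INR k * INR (k - 1)) * Top K h (fun t => RtoC (t ^ (k - 2))) x).
    { intros x Hx. specialize (E x Hx). cbv beta in E.
      rewrite (Top_ext (fun t => - RtoC (INR k * INR (k - 1) * t ^ (k - 2))) (fun t => RtoC (- (INR k * INR (k - 1))) * RtoC (t ^ (k - 2)))) in E.
      2: { intro t. rewrite <- RtoC_mult. unfold RtoC, Copp; simpl. f_equal; ring. }
      rewrite Top_scal in E; auto.
      2: { intros; eapply CDeriv_cont; apply pow_d1. }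
      replace (V2 x) with (q x * Top K h (fun t => RtoC (t ^ k)) x - (- V2 x + q x * Top K h (fun t => RtoC (t ^ k)) x)) by ring.
      rewrite E. replace (RtoC (- (INR k * INR (k - 1)))) with (- RtoC (INR k * INR (k - 1))).
      ring. unfold RtoC, Copp; simpl. f_equal; ring. }
    destruct k as [|[|m]].
    -
      intros x Hx.
      rewrite (ode_ident a q f f1 f2 (Top K h (fun t => RtoC (t ^ 0))) V1 V2 (fun _ => RtoC 0) (fun _ => RtoC 0)
        (fun _ => RtoC 1) ha Df Df1 Hf2 hf_nz D1 D2).
      + unfold phik; simpl. reflexivity.
      + intros y Hy. rewrite E' by auto. simpl INR. rewrite Rmult_0_l. ring.
      + intros y Hy. eapply CDeriv_val. apply CDeriv_const. ring.
      + rewrite V10, P0, hf0. unfold h. apply injective_projections; simpl; ring.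
      + intros y Hy. eapply CDeriv_val. apply CDeriv_const. unfold Cdiv. ring.
      + rewrite P0, hf0. simpl. field.
      + auto.
    -
      intros x Hx.
      rewrite (ode_ident a q f f1 f2 (Top K h (fun t => RtoC (t ^ 1))) V1 V2 (fun _ => RtoC 0) (fun _ => RtoC 1)
        (Xn f 0 1) ha Df Df1 Hf2 hf_nz D1 D2).
      + unfold phik; simpl. reflexivity.
      + intros y Hy. rewrite E' by auto. simpl INR. rewrite Rmult_0_r. ring.
      + intros y Hy. eapply CDeriv_val. apply CDeriv_const. ring.
      + rewrite V10, P0, hf0. unfold h. apply injective_projections; simpl; ring.
      + intros y Hy. eapply CDeriv_val. apply (Xn_deriv f f1 b Hb Df Nb 0 y (Ina y Hy)).
        simpl. unfold Cdiv. replace (RtoC 1) with (RtoC 1) by reflexivity. ring.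
      + rewrite Xn_0, P0, hf0. simpl. replace (0 * 1)%R with 0%R by ring. field.
      + auto.
    -
      specialize (IH m eq_refl).
      replace (S (S m) - 1)%nat with (S m) in * by lia.
      replace (S (S m) - 2)%nat with m in * by lia.
      assert (Z1 : (0 ^ S m = 0)%R) by (apply pow_i; lia).
      assert (Z2 : (0 ^ S (S m) = 0)%R) by (apply pow_i; lia).
      destruct (Nat.even m) eqn:Em.
      +
        assert (Ph : forall n, Nat.even n = true -> forall y, phik f 0 n y = f y * Xtil f 0 n y).
        { intros n En y. unfold phik, Nat.odd. rewrite En. reflexivity. }
        intros x Hx.
        rewrite Ph by (simpl; auto).
        rewrite (ode_ident a q f f1 f2 (Top K h (fun t => RtoC (t ^ S (S m)))) V1 V2
          (fun y => RtoC (INR (S (S m)) * INR (S m)) * Xtil f 0 m y)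
          (fun y => RtoC (INR (S (S m))) * Xtil f 0 (S m) y)
          (Xtil f 0 (S (S m))) ha Df Df1 Hf2 hf_nz D1 D2).
        * reflexivity.
        * intros y Hy. rewrite E' by auto. rewrite IH by auto. rewrite Ph by auto. ring.
        * intros y Hy. pose proof (Xtil_deriv f f1 b Hb Df Nb m y (Ina y Hy)) as XD. rewrite Em in XD.
          eapply CDeriv_val.
          apply (CDeriv_mult (fun _ => RtoC (INR (S (S m)))) (Xtil f 0 (S m))). apply CDeriv_const. exact XD.
          rewrite RtoC_mult. ring.
        * rewrite Xtil_0, V10, P0, hf0, Z1, Z2. unfold h. apply injective_projections; simpl; ring.
        * intros y Hy. pose proof (Xtil_deriv f f1 b Hb Df Nb (S m) y (Ina y Hy)) as XD.
          rewrite Nat.even_succ in XD. unfold Nat.odd in XD. rewrite Em in XD. cbn [negb] in XD.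
          eapply CDeriv_val. exact XD. unfold Cdiv. ring.
        * rewrite Xtil_0, P0, hf0, Z2. field.
        * auto.
      +
        assert (Ph : forall n, Nat.even n = false -> forall y, phik f 0 n y = f y * Xn f 0 n y).
        { intros n En y. unfold phik, Nat.odd. rewrite En. reflexivity. }
        intros x Hx.
        rewrite Ph by (simpl; auto).
        rewrite (ode_ident a q f f1 f2 (Top K h (fun t => RtoC (t ^ S (S m)))) V1 V2
          (fun y => RtoC (INR (S (S m)) * INR (S m)) * Xn f 0 m y)
          (fun y => RtoC (INR (S (S m))) * Xn f 0 (S m) y)
          (Xn f 0 (S (S m))) ha Df Df1 Hf2 hf_nz D1 D2).
        * reflexivity.
        * intros y Hy. rewrite E' by auto. rewrite IH by auto. rewrite Ph by auto. ring.
        * intros y Hy. pose proof (Xn_deriv f f1 b Hb Df Nb m y (Ina y Hy)) as XD. rewrite Em in XD.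
          eapply CDeriv_val.
          apply (CDeriv_mult (fun _ => RtoC (INR (S (S m)))) (Xn f 0 (S m))). apply CDeriv_const. exact XD.
          rewrite RtoC_mult. ring.
        * rewrite Xn_0, V10, P0, hf0, Z1, Z2. unfold h. apply injective_projections; simpl; ring.
        * intros y Hy. pose proof (Xn_deriv f f1 b Hb Df Nb (S m) y (Ina y Hy)) as XD.
          rewrite Nat.even_succ in XD. unfold Nat.odd in XD. rewrite Em in XD. cbn [negb] in XD.
          eapply CDeriv_val. exact XD. unfold Cdiv. ring.
        * rewrite Xn_0, P0, hf0, Z2. field.
        * auto. }
  split.
  2: { intros u u1 u2 [Du [Du1 Cu2]].
       destruct (TM u u1 u2 Du Du1 Cu2) as [V1 [V2 [D1 [D2 [E _]]]]].
       exists V1, V2. auto. }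
  { intros k.
    assert (All : forall n, (forall x, (- a <= x <= a)%R -> Top K h (fun t => RtoC (t ^ n)) x = phik f 0 n x) /\
                            (forall x, (- a <= x <= a)%R -> Top K h (fun t => RtoC (t ^ S n)) x = phik f 0 (S n) x)).
    { induction n as [|n [I1 I2]].
      - split; apply Step; intros m Hm; discriminate.
      - split; auto. apply Step. intros m Hm. injection Hm as Hm. subst m. auto. }
    intros x Hx. apply (proj1 (All k)); auto. }
Qed.
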